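(* Let $L\in\mathbb{N}$ and let the scalar sequences $\{\overline{\sigma}^{(l)}_*(k)\}_{k\ge 0}$ ($*\in\{f,i,o\}$), $\{\overline{\phi}^{(l)}_c(k)\}_{k\ge 0}$ and $\{\eta^{(l)}(k)\}_{k\ge -1}$ be defined as in the context. Then for every layer $l\in[L]$ each of these sequences is monotonically non-increasing in $k$ and convergent.
   Context: Fix $L\in\mathbb{N}$, dimensions $n_x,n_c$, and $x_{\max}>0$. For each layer $l\in[L]$ let $n^{(l)}=n_x$ if $l=1$ and $n^{(l)}=n_c$ if $l\ge 2$, and let $x^{(l)}_{\max}=x_{\max}$ if $l=1$ and $x^{(l)}_{\max}=1$ if $l\ge 2$. Let $W^{(l)}_*\in\mathbb{R}^{n_c\times n^{(l)}}$, $U^{(l)}_*\in\mathbb{R}^{n_c\times n_c}$, $b^{(l)}_*\in\mathbb{R}^{n_c}$ for $*\in\{f,i,c,o\}$. Let $\sigma(w)=1/(1+e^{-w})$ and $\phi(w)=\tanh w$. For a matrix $A$, $|A|$ is the entrywise absolute value; $\mathbf{1}_n$ is the all-ones vector in $\mathbb{R}^n$; for a vector $v$, $v_+$ is the componentwise positive part $(\max\{v_{(j)},0\})_j$; $\|v\|_\infty=\max_j|v_{(j)}|$. Define, for $\eta\ge 0$ and $*\in\{f,i,o\}$, $G^{(l)}_*(\eta)=\big\|\big(x^{(l)}_{\max}|W^{(l)}_*|\mathbf{1}_{n^{(l)}}+\eta|U^{(l)}_*|\mathbf{1}_{n_c}+b^{(l)}_*\big)_+\big\|_\infty$, and $G^{(l)}_c(\eta)=\big\|x^{(l)}_{\max}|W^{(l)}_c|\mathbf{1}_{n^{(l)}}+\eta|U^{(l)}_c|\mathbf{1}_{n_c}+|b^{(l)}_c|\big\|_\infty$.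 Define recursively, with $\eta^{(l)}(-1)=1$ and for $k\ge 0$: $\overline{\sigma}^{(l)}_*(k)=\sigma(G^{(l)}_*(\eta^{(l)}(k-1)))$ for $*\in\{f,i,o\}$; $\overline{\phi}^{(l)}_c(k)=\phi(G^{(l)}_c(\eta^{(l)}(k-1)))$; $\overline{c}^{(l)}(k)=\dfrac{\overline{\sigma}^{(l)}_i(k)\,\overline{\phi}^{(l)}_c(k)}{1-\overline{\sigma}^{(l)}_f(k)}$; $\eta^{(l)}(k)=\phi(\overline{c}^{(l)}(k))\,\overline{\sigma}^{(l)}_o(k)$. *)

(* Defs.v *)
From HB Require Import structures.
From mathcomp Require Import all_boot all_order all_algebra.
From mathcomp Require Import all_classical all_reals all_analysis.
Set Implicit Arguments. Unset Strict Implicit. Unset Printing Implicit Defensive.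
Import Order.TTheory GRing.Theory Num.Theory.
Local Open Scope ring_scope.

Inductive gate := gf | gi | gc | go.

Section LSTM.
Variable R : realType.

Definition sigmoid (w : R) : R := 1 / (1 + expR (- w)).
Definition tanhR (w : R) : R := (expR w - expR (- w)) / (expR w + expR (- w)).

Definition absmx m n (A : 'M[R]_(m, n)) : 'M[R]_(m, n) := map_mx (fun x => `|x|) A.
Definition ones n : 'cV[R]_n := const_mx 1.
Definition pospart m (v : 'cV[R]_m) : 'cV[R]_m := map_mx (fun x => Num.max x 0) v.
(* infinity norm (0 for the empty vector) *)
Definition norminf m (v : 'cV[R]_m) : R := \big[Num.max/0]_(j < m) `|v j 0|.

Variables (nc n : nat) (xm : R)
  (W : gate -> 'M[R]_(nc, n)) (U : gate -> 'M[R]_(nc, nc)) (b : gate -> 'cV[R]_nc).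

Definition Gvec (g : gate) (eta : R) : 'cV[R]_nc :=
  xm *: (absmx (W g) *m ones n) + eta *: (absmx (U g) *m ones nc).

Definition Ggate (g : gate) (eta : R) : R := norminf (pospart (Gvec g eta + b g)).
Definition Gcell (eta : R) : R := norminf (Gvec gc eta + absmx (b gc)).

(* etaS k = eta(k-1), i.e. etaS 0 = eta(-1) = 1, etaS (k+1) = eta(k). *)
Definition sigbar_of (g : gate) (e : R) : R := sigmoid (Ggate g e).
Definition phibar_of (e : R) : R := tanhR (Gcell e).
Definition cbar_of (e : R) : R :=
  sigbar_of gi e * phibar_of e / (1 - sigbar_of gf e).

Fixpoint etaS (k : nat) : R :=
  match k with
  | 0%N => 1
  | k'.+1 => tanhR (cbar_of (etaS k')) * sigbar_of go (etaS k')
  end.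

Definition sigbar (g : gate) (k : nat) : R := sigbar_of g (etaS k).
Definition phibar (k : nat) : R := phibar_of (etaS k).
Definition cbar (k : nat) : R := cbar_of (etaS k).
Definition eta (k : nat) : R := etaS k.+1.
End LSTM.

(* layer l : 'I_L (0-based: val l = 0 is the paper's layer 1) *)
Definition layer_dim (nx nc : nat) L (l : 'I_L) : nat := if val l == 0%N then nx else nc.
Definition layer_xmax (R : realType) (xmax : R) L (l : 'I_L) : R :=
  if val l == 0%N then xmax else 1.

(* Main.v *)
Require Import Defs.
From HB Require Import structures.
From mathcomp Require Import all_boot all_order all_algebra.
From mathcomp Require Import all_classical all_reals all_analysis.
From mathcomp Require Import ring lra.
Import Order.TTheory GRing.Theory Num.Theory numFieldNormedType.Exports.
Local Open Scope ring_scope.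

Section Aux.
Variable R : realType.

Lemma sigmoidE (x : R) : sigmoid x = expR x / (expR x + 1).
Proof.
rewrite /sigmoid expRN; have h := expR_gt0 x.
have h1 : 0 < expR x + 1 by rewrite addr_gt0.
by field; rewrite (gt_eqF h) (gt_eqF h1).
Qed.

Lemma tanhE (x : R) : tanhR x = (expR x ^+ 2 - 1) / (expR x ^+ 2 + 1).
Proof.
rewrite /tanhR expRN; have h := expR_gt0 x.
have h2 : 0 < expR x ^+ 2 + 1 by rewrite addr_gt0 // exprn_gt0.
have h3 : 0 < expR x + (expR x)^-1 by rewrite addr_gt0 // invr_gt0.
by field; rewrite (gt_eqF h) (gt_eqF h2).
Qed.

Lemma sigmoid_gt0 (x : R) : 0 < sigmoid x.
Proof. rewrite sigmoidE; have h := expR_gt0 x; by rewrite divr_gt0 // ltr_wpDr // ltW. Qed.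

Lemma sigmoid_le1 (x : R) : sigmoid x <= 1.
Proof.
rewrite sigmoidE; have h := expR_gt0 x.
rewrite ler_pdivrMr ?mul1r ?lerDl //; by rewrite ltr_wpDr // ltW.
Qed.

Lemma sigmoid_mono (x y : R) : x <= y -> sigmoid x <= sigmoid y.
Proof.
move=> xy; rewrite !sigmoidE.
have hx := expR_gt0 x; have hy := expR_gt0 y.
have exy : expR x <= expR y by rewrite ler_expR.
rewrite -subr_ge0.
have -> : expR y / (expR y + 1) - expR x / (expR x + 1)
   = (expR y - expR x) / ((expR x + 1) * (expR y + 1)).
  field; apply/andP; split; rewrite gt_eqF // ltr_wpDr // ltW //.
by rewrite divr_ge0 ?subr_ge0 // mulr_ge0 // addr_ge0 // ltW.
Qed.

Lemma tanh_mono (x y : R) : x <= y -> tanhR x <= tanhR y.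
Proof.
move=> xy; rewrite !tanhE.
have hx := expR_gt0 x; have hy := expR_gt0 y.
have exy : expR x ^+ 2 <= expR y ^+ 2.
  have e1 : expR x <= expR y by rewrite ler_expR.
  by rewrite !expr2 ler_pM // ltW.
have px : 0 < expR x ^+ 2 + 1 by rewrite addr_gt0 // exprn_gt0.
have py : 0 < expR y ^+ 2 + 1 by rewrite addr_gt0 // exprn_gt0.
rewrite -subr_ge0.
have -> : (expR y ^+ 2 - 1) / (expR y ^+ 2 + 1) - (expR x ^+ 2 - 1) / (expR x ^+ 2 + 1)
   = 2 * (expR y ^+ 2 - expR x ^+ 2) / ((expR x ^+ 2 + 1) * (expR y ^+ 2 + 1)).
  by field; rewrite !gt_eqF.
by rewrite divr_ge0 ?mulr_ge0 ?subr_ge0 // ltW.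
Qed.

Lemma tanh_ge0 (x : R) : 0 <= x -> 0 <= tanhR x.
Proof.
move=> x0; have := @tanh_mono 0 x x0; suff -> : tanhR (0:R) = 0 by [].
by rewrite tanhE expR0 expr1n subrr mul0r.
Qed.

Lemma tanh_le1 (x : R) : tanhR x <= 1.
Proof.
rewrite tanhE; have px : 0 < expR x ^+ 2 + 1 by rewrite addr_gt0 // exprn_gt0 // expR_gt0.
by rewrite ler_pdivrMr // mul1r lerD2l; apply: (@le_trans _ _ 0); rewrite ?lerN10 // ler01.
Qed.

Lemma norminf_ge0 m (v : 'cV[R]_m) : 0 <= norminf v.
Proof. by rewrite /norminf; elim/big_ind: _ => // x y hx hy; rewrite le_max hx. Qed.

Lemma norminf_mono m (v w : 'cV[R]_m) :
  (forall j, `|v j 0| <= `|w j 0|) -> norminf v <= norminf w.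
Proof.
move=> h; rewrite /norminf; elim/big_ind2: _ => // x1 x2 y1 y2 h1 h2.
rewrite ge_max !le_max h1 h2 /= orbT; done.
Qed.

Lemma maxmono (x y : R) : x <= y -> Num.max x 0 <= Num.max y 0.
Proof. by move=> h; rewrite ge_max !le_max h lexx !orbT. Qed.

Variables (nc n : nat) (xm : R) (hxm : 0 <= xm)
  (W : gate -> 'M[R]_(nc, n)) (U : gate -> 'M[R]_(nc, nc)) (b : gate -> 'cV[R]_nc).

Lemma GvecE g e j : Gvec xm W U g e j 0 =
  xm * (\sum_k `|W g j k|) + e * (\sum_k `|U g j k|).
Proof.
rewrite /Gvec !mxE !big_distrr /=; congr (_ + _); apply: eq_bigr => k _;
by rewrite !mxE mulr1.
Qed.

Lemma Gvec_mono g e e' j : e <= e' -> Gvec xm W U g e j 0 <= Gvec xm W U g e' j 0.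
Proof.
move=> h; rewrite !GvecE lerD2l ler_wpM2r //.
by apply: sumr_ge0 => k _.
Qed.

Lemma Gvec_ge0 g e j : 0 <= e -> 0 <= Gvec xm W U g e j 0.
Proof.
move=> h; rewrite GvecE addr_ge0 // mulr_ge0 //; by apply: sumr_ge0 => k _.
Qed.

Lemma Ggate_mono g e e' : e <= e' -> Ggate xm W U b g e <= Ggate xm W U b g e'.
Proof.
move=> h; apply: norminf_mono => j; move: (Gvec_mono g _ _ j h); rewrite !mxE => H.
rewrite !ger0_norm; last 2 first.
- by rewrite le_max lexx orbT.
- by rewrite le_max lexx orbT.
by apply: maxmono; rewrite lerD2r.
Qed.

Lemma Ggate_ge0 g e : 0 <= Ggate xm W U b g e.
Proof. exact: norminf_ge0. Qed.

Lemma Gcell_mono e e' : 0 <= e -> e <= e' -> Gcell xm W U b e <= Gcell xm W U b e'.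
Proof.
move=> h0 h; apply: norminf_mono => j.
have e'0 : 0 <= e' by apply: le_trans h.
move: (Gvec_mono gc _ _ j h) (Gvec_ge0 gc _ j h0) (Gvec_ge0 gc _ j e'0); rewrite !mxE => H1 H2 H3.
rewrite (ger0_norm (addr_ge0 H2 (normr_ge0 _))) (ger0_norm (addr_ge0 H3 (normr_ge0 _))).
by rewrite lerD2r.
Qed.

Lemma Gcell_ge0 e : 0 <= Gcell xm W U b e.
Proof. exact: norminf_ge0. Qed.

Lemma cbarE e : cbar_of xm W U b e =
  sigbar_of xm W U b gi e * phibar_of xm W U b e * (expR (Ggate xm W U b gf e) + 1).
Proof.
rewrite /cbar_of /sigbar_of; congr (_ * _).
rewrite sigmoidE; set a := expR _; have ha : 0 < a by apply: expR_gt0.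
have h1 : 0 < a + 1 by rewrite ltr_wpDr // ltW.
have -> : 1 - a / (a + 1) = (a + 1)^-1 by field; rewrite gt_eqF.
by rewrite invrK.
Qed.

Lemma phibar_ge0 e : 0 <= phibar_of xm W U b e.
Proof. by apply: tanh_ge0; apply: Gcell_ge0. Qed.

Lemma cbar_ge0 e : 0 <= cbar_of xm W U b e.
Proof.
have s0 := ltW (sigmoid_gt0 (Ggate xm W U b gi e)).
have e0 := ltW (expR_gt0 (Ggate xm W U b gf e)).
by rewrite cbarE; apply: mulr_ge0; [apply: mulr_ge0 =>//; apply: phibar_ge0 | apply: addr_ge0].
Qed.

Lemma cbar_mono e e' : 0 <= e -> e <= e' -> cbar_of xm W U b e <= cbar_of xm W U b e'.
Proof.
move=> h0 h; rewrite !cbarE.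
have s0 := ltW (sigmoid_gt0 (Ggate xm W U b gi e)).
have e0 := ltW (expR_gt0 (Ggate xm W U b gf e)).
have p0 := phibar_ge0 e.
have A1 : sigbar_of xm W U b gi e <= sigbar_of xm W U b gi e'.
  by apply: sigmoid_mono; apply: Ggate_mono.
have A2 : phibar_of xm W U b e <= phibar_of xm W U b e'.
  by apply: tanh_mono; apply: Gcell_mono.
have A3 : expR (Ggate xm W U b gf e) + 1 <= expR (Ggate xm W U b gf e') + 1.
  by rewrite lerD2r ler_expR Ggate_mono.
have e1 : 0 <= expR (Ggate xm W U b gf e) + 1 by apply: addr_ge0.
exact: (ler_pM (mulr_ge0 s0 p0) e1 (ler_pM s0 p0 A1 A2) A3).
Qed.

Definition Fst e := tanhR (cbar_of xm W U b e) * sigbar_of xm W U b go e.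

Lemma F_ge0 e : 0 <= Fst e.
Proof.
have s0 := ltW (sigmoid_gt0 (Ggate xm W U b go e)).
have t0 := @tanh_ge0 _ (cbar_ge0 e).
exact: (mulr_ge0 t0 s0).
Qed.

Lemma F_le1 e : Fst e <= 1.
Proof.
have s0 := ltW (sigmoid_gt0 (Ggate xm W U b go e)).
have t0 := @tanh_ge0 _ (cbar_ge0 e).
rewrite -[1]mulr1 /Fst.
exact: (ler_pM t0 s0 (tanh_le1 _) (sigmoid_le1 _)).
Qed.

Lemma F_mono e e' : 0 <= e -> e <= e' -> Fst e <= Fst e'.
Proof.
move=> h0 h.
have s0 := ltW (sigmoid_gt0 (Ggate xm W U b go e)).
have t0 := @tanh_ge0 _ (cbar_ge0 e).
have A1 : tanhR (cbar_of xm W U b e) <= tanhR (cbar_of xm W U b e').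
  by apply: tanh_mono; apply: cbar_mono.
have A2 : sigbar_of xm W U b go e <= sigbar_of xm W U b go e'.
  by apply: sigmoid_mono; apply: Ggate_mono.
exact: (ler_pM t0 s0 A1 A2).
Qed.

Lemma etaS_ge0 k : 0 <= etaS xm W U b k.
Proof. by case: k => [|k] //=; exact: F_ge0. Qed.

Lemma etaS_step k : etaS xm W U b k.+1 <= etaS xm W U b k.
Proof.
elim: k => [|k IH]; first exact: F_le1.
exact: (F_mono _ _ (etaS_ge0 k.+1) IH).
Qed.

Lemma etaS_noninc : nonincreasing_seq (etaS xm W U b).
Proof. by apply/nonincreasing_seqP => k; apply: etaS_step. Qed.

Lemma main_aux :
    (forall g : gate,
       nonincreasing_seq (sigbar xm W U b g) /\ cvgn (sigbar xm W U b g)) /\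
    (nonincreasing_seq (phibar xm W U b) /\ cvgn (phibar xm W U b)) /\
    (nonincreasing_seq (etaS xm W U b) /\ cvgn (etaS xm W U b)).
Proof.
have hs : forall g, nonincreasing_seq (sigbar xm W U b g).
  move=> g; apply/nonincreasing_seqP => k.
  by apply: sigmoid_mono; apply: Ggate_mono; apply: etaS_step.
have hp : nonincreasing_seq (phibar xm W U b).
  apply/nonincreasing_seqP => k.
  by apply: tanh_mono; apply: Gcell_mono; [apply: etaS_ge0 | apply: etaS_step].
split; [|split; split].
- move=> g; split => //; apply: nonincreasing_is_cvgn => //.
  by exists 0 => _ [k _ <-]; apply: ltW; apply: sigmoid_gt0.
- by [].
- apply: nonincreasing_is_cvgn => //.
  by exists 0 => _ [k _ <-]; apply: phibar_ge0.
- exact: etaS_noninc.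
- apply: nonincreasing_is_cvgn; first exact: etaS_noninc.
  by exists 0 => _ [k _ <-]; apply: etaS_ge0.
Qed.
End Aux.

Theorem lemmaB1 (R : realType) (L nx nc : nat) (xmax : R) (hxmax : 0 < xmax)
  (W : forall l : 'I_L, gate -> 'M[R]_(nc, layer_dim nx nc l))
  (U : 'I_L -> gate -> 'M[R]_(nc, nc))
  (b : 'I_L -> gate -> 'cV[R]_nc) :
  forall l : 'I_L,
    let xm := layer_xmax xmax l in
    (forall g : gate, g <> gc ->
       nonincreasing_seq (sigbar xm (W l) (U l) (b l) g) /\
       cvgn (sigbar xm (W l) (U l) (b l) g)) /\
    (nonincreasing_seq (phibar xm (W l) (U l) (b l)) /\
       cvgn (phibar xm (W l) (U l) (b l))) /\
    (nonincreasing_seq (etaS xm (W l) (U l) (b l)) /\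
       cvgn (etaS xm (W l) (U l) (b l))).
Proof.
move=> l xm.
have hxm : 0 <= xm by rewrite /xm /layer_xmax; case: ifP => _ //; exact: ltW.
have [h1 [h2 h3]] := @main_aux _ _ _ _ hxm (W l) (U l) (b l).
by split; [move=> g _; exact: h1 | split].
Qed.
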